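(* Fix $m\ge 2$. Assume that for all $(s,k)$ an $m$-odd-even merger $\mathrm{oe\_merge}^s_k$ of order $k$ on $s$ inputs is given. Define recursively, for $1\le k\le n$, the comparator network $\mathrm{oe\_sel}^n_k$ on input $\bar x\in X^n$ as follows. If $k=1$: output $\max^n(\bar x)$. If $k\ge 2$: choose integers $n_1\ge\dots\ge n_m\ge 0$ with $\sum_i n_i=n$ and $n_1<n$. Split $\bar x$ into consecutive blocks $\bar x^1,\dots,\bar x^m$ of lengths $n_1,\dots,n_m$. For each $i$ let $k_i=\min(k,n_i)$ and $\bar y^i=\mathrm{oe\_sel}^{n_i}_{k_i}(\bar x^i)$ (with $\bar y^i=\bar x^i$ if $k_i=0$). Let $s=\sum_ik_i$ and $\overline{out}=\mathrm{suff}(k_1+1,\bar y^1)::\dots::\mathrm{suff}(k_m+1,\bar y^m)$. Output $\mathrm{oe\_merge}^s_k(\langle \mathrm{pref}(k_1,\bar y^1),\dots,\mathrm{pref}(k_m,\bar y^m)\rangle)::\overline{out}$. Then for every choice of the splittings, $\mathrm{oe\_sel}^n_k$ is a $k$-selection network, i.e. for every $\bar x\in X^n$ the output is top $k$ sorted.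
   Context: $X$ is a totally ordered set. A sequence is sorted if it is non-increasing. $::$ is concatenation; $\mathrm{pref}(i,\bar x)=\langle x_1,\dots,x_i\rangle$, $\mathrm{suff}(i,\bar x)=\langle x_i,\dots,x_n\rangle$ (empty if $i>n$). A comparator network is a map on sequences obtained by composing sorters (which rearrange the values at chosen positions into non-increasing order) and fixed rearrangements of positions; it permutes its input. $\max^n$ is a comparator network on $n$ inputs whose first output is the maximum of the inputs. A sequence $\bar x\in X^n$ is top $k$ sorted ($k\le n$) if $\langle x_1,\dots,x_k\rangle$ is sorted and $x_i\ge x_j$ for all $i\le k<j$; by convention a sequence of length at most $k$ is top $k$ sorted iff it is sorted. A $k$-selection network on $n$ inputs is a comparator network whose output is top $k$ sorted for every input. An $m$-odd-even merger of order $k$ on $s$ inputs is a comparator network $f$ such that for every tuple $\langle\bar x^1,\dots,\bar x^m\rangle$ in which each $\bar x^i$ is top $k$ sorted and $\sum_i|\bar x^i|=s$, $f(\bar x^1::\dots::\bar x^m)$ is top $k$ sorted. *)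

(* Defs.v *)
From mathcomp Require Import all_boot all_order.
Set Implicit Arguments. Unset Strict Implicit. Unset Printing Implicit Defensive.
Import Order.TTheory.
Local Open Scope order_scope.

(* Syntax of comparator networks: a finite composition of sorters and
   fixed rearrangements of positions (positions are 0-based). *)
Inductive cnet : Type :=
| CId : cnet
| CSort : seq nat -> cnet -> cnet   (* CSort I c : first apply c, then sort positions I *)
| CPerm : seq nat -> cnet -> cnet.  (* CPerm p c : first apply c, then output j := input (p j) *)

Fixpoint cnet_on (n : nat) (c : cnet) : bool :=
  match c with
  | CId => true
  | CSort J c' => [&& uniq J, all (fun i => (i < n)%N) J & cnet_on n c']
  | CPerm p c' => perm_eq p (iota 0 n) && cnet_on n c'
  end.

Section Eval.
Context {d : Order.disp_t} {X : orderType d}.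

(* "sorted" = non-increasing *)
Definition nonincr (x : seq X) : bool := sorted (>=%O) x.

(* sorter on positions I: the values at positions I (listed in the order of I)
   are rearranged into non-increasing order *)
Definition sorter (J : seq nat) (x : seq X) : seq X :=
  let ix := zip (iota 0 (size x)) x in
  let vals := sort (>=%O) [seq p.2 | p <- ix & p.1 \in J] in
  [seq (if p.1 \in J then nth p.2 vals (index p.1 J) else p.2) | p <- ix].

Definition rearr (p : seq nat) (x : seq X) : seq X := pmap (onth x) p.

Fixpoint ceval (c : cnet) (x : seq X) : seq X :=
  match c with
  | CId => x
  | CSort J c' => sorter J (ceval c' x)
  | CPerm p c' => rearr p (ceval c' x)
  end.

Definition top_sorted (k : nat) (x : seq X) : bool :=
  if (size x <= k)%N then nonincr x
  else nonincr (take k x) && all (fun a => all (fun b => b <= a) (drop k x)) (take k x).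

(* The recursive odd-even selection network oe_sel^n_k, parameterised by
   the max networks [maxnet n] (= max^n), the mergers [merger s k]
   (= oe_merge^s_k) and the splitting choice [split n k] = [n_1;...;n_m].
   [fuel] bounds the recursion depth; oe_sel uses fuel n.+1, which suffices
   since the block sizes strictly decrease (n_i <= n_1 < n). *)
Fixpoint oe_sel_rec (maxnet : nat -> cnet) (merger : nat -> nat -> cnet)
    (split : nat -> nat -> seq nat) (fuel n k : nat) (x : seq X) : seq X :=
  match fuel with
  | 0 => x
  | fuel'.+1 =>
    if (k <= 1)%N then ceval (maxnet n) x else
    let ns := split n k in
    let blocks := reshape ns x in
    let ks := [seq minn k ni | ni <- ns] in
    let ys := [seq (if minn k p.1 == 0%N then p.2
                    else oe_sel_rec maxnet merger split fuel' p.1 (minn k p.1) p.2)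
              | p <- zip ns blocks] in
    let s := sumn ks in
    ceval (merger s k) (flatten [seq take p.1 p.2 | p <- zip ks ys])
      ++ flatten [seq drop p.1 p.2 | p <- zip ks ys]
  end.

Definition oe_sel maxnet merger split (n k : nat) (x : seq X) : seq X :=
  oe_sel_rec maxnet merger split n.+1 n k x.

End Eval.

(* Main.v *)
Require Import Defs.
From mathcomp Require Import all_boot all_order.
From mathcomp Require Import zify.
Import Order.TTheory.
Local Open Scope order_scope.

Section S.
Context {d : Order.disp_t} {X : orderType d}.

Lemma zip_iota_nth (x0 : X) (x : seq X) :
  zip (iota 0 (size x)) x = [seq (i, nth x0 x i) | i <- iota 0 (size x)].
Proof.
apply: (@eq_from_nth _ (0%N, x0)); first by rewrite size_zip size_map size_iota minnn.
move=> i; rewrite size_zip size_iota minnn => hi.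
by rewrite nth_zip ?size_iota // (nth_map 0%N) ?size_iota // nth_iota.
Qed.

Lemma sorter_perm (x0 : X) J (x : seq X) :
  uniq J -> all (fun i => (i < size x)%N) J -> perm_eq (sorter J x) x.
Proof.
move=> uJ aJ; rewrite /sorter (zip_iota_nth x0).
set I := iota 0 (size x).
rewrite filter_map -!map_comp.
set vals := sort _ _.
set F := (fun _ => _) \o _.
have fJ : perm_eq [seq i <- I | (preim (fun i => (i, nth x0 x i)) (fun p => p.1 \in J)) i] J.
  apply: uniq_perm => //; first by rewrite filter_uniq ?iota_uniq.
  move=> i; rewrite mem_filter /= mem_iota /=.
  case iJ: (i \in J) => //=. by move/allP: aJ => /(_ _ iJ).
have sv : size vals = size J by rewrite size_sort size_map (perm_size fJ).
rewrite -[X in perm_eq _ X](mkseq_nth x0 x) /mkseq -/I.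
pose a := preim (fun i => (i, nth x0 x i)) (fun p : nat * X => p.1 \in J).
have h : perm_eq I (filter a I ++ filter (predC a) I) by rewrite perm_sym perm_filterC.
apply: (perm_trans (perm_map F h)); rewrite perm_sym.
apply: (perm_trans (perm_map (nth x0 x) h)); rewrite perm_sym.
rewrite !map_cat; apply: perm_cat; last first.
  have -> : map F (filter (predC a) I) = map (nth x0 x) (filter (predC a) I).
    by apply/eq_in_map => i; rewrite mem_filter /F /= => /andP[/negbTE -> _].
  by [].
apply: (@perm_trans _ (map F J)); first by apply: perm_map; exact: fJ.
have -> : map F J = vals.
  have -> : map F J = map (fun i => nth x0 vals (index i J)) J.
    apply/eq_in_map; by move=> i iJ; rewrite /F /= iJ; apply: set_nth_default; rewrite sv index_mem.
  rewrite (map_comp (nth x0 vals) (index^~ J)).  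
  have -> : map (index^~ J) J = iota 0 (size J).
    apply: (@eq_from_nth _ 0%N); first by rewrite size_map size_iota.
    move=> i; rewrite size_map => hi.
    by rewrite (nth_map 0%N) // index_uniq // nth_iota.
  by rewrite -sv; exact: (mkseq_nth x0 vals).
by rewrite perm_sort.
Qed.

Lemma rearr_perm (x0 : X) p (x : seq X) :
  perm_eq p (iota 0 (size x)) -> perm_eq (rearr p x) x.
Proof.
move=> hp; rewrite /rearr.
have ap : all (fun i => (i < size x)%N) p.
  by apply/allP => i; rewrite (perm_mem hp) mem_iota.
have -> : pmap (onth x) p = map (nth x0 x) p.
  elim: p ap {hp} => //= i p IH /andP[hi ap].
  have := onthTE x i; rewrite hi; case: (onth x i) (odflt_onth x0 x i) => //= y <- _.
  by rewrite IH.
rewrite -{2}(mkseq_nth x0 x); exact: perm_map.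
Qed.

Lemma ceval_perm c (x : seq X) : cnet_on (size x) c -> perm_eq (ceval c x) x.
Proof.
case: x => [|x0 x'].
  move=> _; suff -> : ceval c ([::] : seq X) = [::] by [].
  elim: c => [|J c IH|p c IH] /=; first by [].
    by rewrite IH.
  by rewrite IH /rearr; elim: p => //= i p ->; rewrite onth0n.
set x := x0 :: x'.
elim: c => [|J c IH|p c IH] /=; first by [].
  case/and3P=> uJ aJ /IH h; have hs := perm_size h.
  by apply: (perm_trans _ h); apply: (sorter_perm x0) => //; rewrite hs.
case/andP=> hp /IH h; have hs := perm_size h.
by apply: (perm_trans _ h); apply: (rearr_perm x0); rewrite hs.
Qed.

Lemma top_sortedE k (x : seq X) : top_sorted k x =
  nonincr (take k x) && all (fun a => all (fun b => b <= a) (drop k x)) (take k x).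
Proof.
rewrite /top_sorted; case: leqP => // h.
rewrite take_oversize // drop_oversize //.
by case: (nonincr x) => //=; elim: x {h} => //= a x ->.
Qed.

Lemma sumn_ge (T : eqType) (f : T -> nat) s t : t \in s -> (f t <= sumn (map f s))%N.
Proof. elim: s => //= a s IH; rewrite inE => /orP[/eqP -> | /IH]; lia. Qed.

Lemma step k (P : seq (nat * seq X)) (M : seq X) :
 (forall p, p \in P -> top_sorted p.1 p.2 /\ ((p.1 < size p.2)%N -> p.1 = k)) ->
 perm_eq M (flatten [seq take p.1 p.2 | p <- P]) -> top_sorted k M -> (k <= size M)%N ->
 top_sorted k (M ++ flatten [seq drop p.1 p.2 | p <- P]).
Proof.
move=> hP hM tM kM.
set D := flatten _.
have e1 : take k (M ++ D) = take k M.
  rewrite take_cat; case: ltnP => // h.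
  have -> : (k - size M = 0)%N by lia.
  by rewrite take0 cats0 take_oversize.
have e2 : drop k (M ++ D) = drop k M ++ D.
  rewrite drop_cat; case: ltnP => // h.
  have -> : (k - size M = 0)%N by lia.
  by rewrite drop0 drop_oversize.
move: tM; rewrite !top_sortedE e1 e2 => /andP[-> al] /=.
apply/allP => a ha; rewrite all_cat (allP al a ha) /=.
apply/allP => b /flattenP [s /mapP [p pP ->] hb].
rewrite leNgt; apply/negP => ab.
have [tp hk] := hP p pP.
have lt : (p.1 < size p.2)%N.
  have : (0 < size (drop p.1 p.2))%N by case: (drop _ _) hb.
  rewrite size_drop; lia.
have k1 := hk lt; rewrite k1 in lt tp.
move: tp; rewrite top_sortedE => /andP[_ alp].
have cT : count (fun c => b <= c) (take k p.2) = k.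
  have : all (fun c => b <= c) (take k p.2).
    by apply/allP => c hc; move: (allP alp c hc) => /allP; apply; rewrite -k1.
  by rewrite all_count size_takel ?(ltnW lt) // => /eqP.
have c1 : (k <= count (fun c => (b <= c)%O) M)%N.
  rewrite (permP hM) count_flatten -cT.
  rewrite -k1 -map_comp; exact: (@sumn_ge _ (fun p : nat * seq X => count (fun c : X => (b <= c)%O) (take p.1 p.2)) _ _ pP).
have c2 : count (fun c => b <= c) (drop k M) = 0%N.
  apply/eqP; rewrite eqn0Ngt -has_count; apply/hasPn => c hc.
  by rewrite leNgt (le_lt_trans _ ab) //; move/allP: (allP al a ha); apply.
have c3 : (count (fun c => (b <= c)%O) (take k M) < k)%N.
  have sz : size (take k M) = k by rewrite size_takel.
  have hn : has (predC (fun c => b <= c)) (take k M).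
    by apply/hasP; exists a => //=; rewrite lt_geF.
  move: hn (count_predC (fun c => (b <= c)%O) (take k M)); rewrite has_count sz; lia.
move: c1; rewrite -(cat_take_drop k M) count_cat c2; lia.
Qed.

End S.

Lemma reshape_sizes (T : eqType) sh (x : seq T) : sumn sh = size x ->
  forall q, q \in zip sh (reshape sh x) -> size q.2 = q.1.
Proof.
elim: sh x => //= a sh IH x hs q; rewrite inE => /orP[/eqP -> /=|].
  by rewrite size_takel //; lia.
by apply: IH; rewrite size_drop; lia.
Qed.

Lemma sorted_geq_head s t : sorted geq s -> t \in s -> (t <= head 0 s)%N.
Proof.
case: s => //= a s hs; rewrite inE => /orP[/eqP -> //|ts].
have := order_path_min (fun _ _ _ h1 h2 => leq_trans h2 h1) hs.
by move/allP => /(_ _ ts).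
Qed.

Lemma sumn_min k ns : (minn k (sumn ns) <= sumn (map (minn k) ns))%N.
Proof. elim: ns => [|a ns IH] /=; lia. Qed.

Lemma map_unzip1 (A B C : Type) (f : A -> C) (s : seq A) (t : seq B) :
  (size s <= size t)%N -> map f s = map (fun q => f q.1) (zip s t).
Proof. by elim: s t => [|a s IH] [|b t] //= h; rewrite (IH t). Qed.

Lemma size_take_drop (T : Type) (P : seq (nat * seq T)) :
  (size (flatten [seq take p.1 p.2 | p <- P]) + size (flatten [seq drop p.1 p.2 | p <- P]) =
  sumn [seq size p.2 | p <- P])%N.
Proof.
elim: P => //= p P IH; rewrite !size_cat -IH.
have := congr1 size (cat_take_drop p.1 p.2); rewrite size_cat; lia.
Qed.

Lemma main_rec (d : Order.disp_t) (X : orderType d) (m : nat)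
    (maxnet : nat -> cnet) (merger : nat -> nat -> cnet)
    (split : nat -> nat -> seq nat) :
  (forall n, cnet_on n (maxnet n)) ->
  (forall n (x : seq X) (y : X), size x = n -> y \in x ->
     y <= head y (ceval (maxnet n) x)) ->
  (forall s k, cnet_on s (merger s k)) ->
  (forall s k (xs : seq (seq X)), size xs = m -> all (top_sorted k) xs ->
     sumn [seq size xi | xi <- xs] = s ->
     top_sorted k (ceval (merger s k) (flatten xs))) ->
  (forall n k, (2 <= k <= n)%N ->
     [/\ size (split n k) = m, sorted geq (split n k),
         sumn (split n k) = n & (head 0 (split n k) < n)%N]) ->
  forall f n k (x : seq X), (n < f)%N -> (1 <= k <= n)%N -> size x = n ->
    size (oe_sel_rec maxnet merger split f n k x) = n /\
    top_sorted k (oe_sel_rec maxnet merger split f n k x).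
Proof.
move=> hmc hmax hgc hg hsp.
elim=> [|f IH] n k x //= hnf hk hx.
case: ifP => hk1.
  have k1 : k = 1%N by lia.
  have hp := @ceval_perm _ _ (maxnet n) x; rewrite hx in hp.
  have {}hp := hp (hmc n).
  split; first by rewrite (perm_size hp).
  rewrite k1 top_sortedE.
  move: (hmax n x) hp; case: (ceval (maxnet n) x) => [|a0 r] hm hp.
    by move: (perm_size hp); rewrite hx /=; lia.
  rewrite /= drop0 take0 /= andbT.
  apply/allP => b br; apply: (hm b hx).
  by rewrite -(perm_mem hp) inE br orbT.
have hk2 : (2 <= k)%N by rewrite ltnNge hk1.
have [szs sos sus hds] := hsp n k ltac:(lia).
pose g := fun p : nat * seq X => if minn k p.1 == 0%N then p.2
   else oe_sel_rec maxnet merger split f p.1 (minn k p.1) p.2.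
set ns := split n k in szs sos sus hds *.
set Z := zip ns (reshape ns x).
have eks : [seq minn k ni | ni <- ns] = [seq minn k q.1 | q <- Z].
  by apply: map_unzip1; rewrite size_reshape.
rewrite eks -/g zip_map.
have eZ : map fst Z = ns by apply: unzip1_zip; rewrite size_reshape.
have hZ : forall q, q \in Z -> size q.2 = q.1 /\ (q.1 < f)%N.
  move=> q qZ; split; first by apply: (@reshape_sizes _ ns x) qZ; rewrite sus hx.
  have aZ : q.1 \in ns by rewrite -eZ; apply: map_f.
  have := sorted_geq_head _ _ sos aZ; lia.
have hQ : forall q, q \in Z -> size (g q) = q.1 /\ top_sorted (minn k q.1) (g q).
  move=> [a b] qZ; have [/= s1 lf] := hZ _ qZ; rewrite /g /=; case: eqP => e.
    have q0 : a = 0%N by lia.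
    rewrite e s1 q0; split => //.
    by have -> : b = [::] by apply/size0nil; rewrite s1 q0.
  apply: IH; lia.
set P := [seq (minn k i.1, g i) | i <- Z].
have hP : forall p, p \in P -> [/\ (p.1 <= size p.2)%N, (p.1 <= k)%N, top_sorted p.1 p.2
     & ((p.1 < size p.2)%N -> p.1 = k)].
  move=> p /mapP [[a b] qZ ->] /=; have [/= s1 t1] := hQ _ qZ; rewrite s1; split => //; lia.
have eS : sumn [seq minn k q.1 | q <- Z] = sumn (map fst P) by rewrite /P -map_comp.
have eT : size (flatten [seq take p.1 p.2 | p <- P]) = sumn [seq minn k q.1 | q <- Z].
  rewrite size_flatten eS /shape -map_comp; congr sumn; apply/eq_in_map => p pP /=.
  by have [a _ _ _] := hP p pP; rewrite size_takel.
have hM := @ceval_perm _ _ (merger (sumn [seq minn k q.1 | q <- Z]) k)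
   (flatten [seq take p.1 p.2 | p <- P]).
rewrite eT in hM; have {}hM := hM (hgc _ _).
split.
  rewrite size_cat (perm_size hM) size_take_drop /P -map_comp.
  transitivity (sumn (map fst Z)); last by rewrite eZ sus.
  by congr sumn; apply/eq_in_map => q qZ /=; have [] := hQ q qZ.
apply: step.
- by move=> p pP; have [] := hP p pP.
- exact: hM.
- apply: hg => //.
  + by rewrite size_map size_map size_zip size_reshape minnn.
  + apply/allP => _ /mapP [p pP ->]; have [a b c _] := hP p pP.
    rewrite /top_sorted size_takel // b /=.
    by move: c; rewrite top_sortedE => /andP[].
  + by rewrite -eT size_flatten.
- rewrite (perm_size hM) eT -eks; have := sumn_min k ns; rewrite sus.
  by have -> : minn k n = k by apply/minn_idPl; lia.
Qed.

Theorem mainTheorem4 (d : Order.disp_t) (X : orderType d) (m : nat)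
    (maxnet : nat -> cnet) (merger : nat -> nat -> cnet)
    (split : nat -> nat -> seq nat) :
  (2 <= m)%N ->
  (* max^n is a comparator network on n inputs whose first output is the maximum *)
  (forall n, cnet_on n (maxnet n)) ->
  (forall n (x : seq X) (y : X), size x = n -> y \in x ->
     y <= head y (ceval (maxnet n) x)) ->
  (* oe_merge^s_k is an m-odd-even merger of order k on s inputs *)
  (forall s k, cnet_on s (merger s k)) ->
  (forall s k (xs : seq (seq X)), size xs = m -> all (top_sorted k) xs ->
     sumn [seq size xi | xi <- xs] = s ->
     top_sorted k (ceval (merger s k) (flatten xs))) ->
  (* admissible splittings n_1 >= ... >= n_m >= 0, sum n, n_1 < n *)
  (forall n k, (2 <= k <= n)%N ->
     [/\ size (split n k) = m, sorted geq (split n k),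
         sumn (split n k) = n & (head 0 (split n k) < n)%N]) ->
  forall n k, (1 <= k <= n)%N ->
  forall x : seq X, size x = n ->
    top_sorted k (oe_sel maxnet merger split n k x).
Proof.
move=> _ h1 h2 h3 h4 h5 n k hk x hx.
by have [] := @main_rec _ _ m _ _ _ h1 h2 h3 h4 h5 n.+1 n k x (ltnSn n) hk hx.
Qed.
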